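(* There exists a pairwise-intersecting double-interval society with $8$ voters and approval number $3$. On the other hand, every double-$8$ string has diameter at least $3$, so every society obtained from a double-$8$ string (by the construction below) has approval number at least $4$.
   Context: A double-interval society consists of a finite set of $n$ voters, each voter $v$ having an approval set $A_v\subseteq\mathbb{R}$ that is the union of two disjoint bounded closed intervals; it is pairwise-intersecting if $A_u\cap A_v\ne\emptyset$ for all voters $u,v$. The approval number of the society is the maximum over $p\in\mathbb{R}$ of the number of voters $v$ with $p\in A_v$. A double-$n$ string is a string of length $2n$ over $n$ symbols with each symbol appearing exactly twice; the distance between two distinct symbols is the minimum absolute difference of positions of an occurrence of each, and the diameter is the maximum of these distances over all pairs of distinct symbols. From a double-$n$ string of diameter $d$ one builds a society by letting each symbol be a voter and assigning to each of the $2n$ entries a closed interval, all of equal width, placed in the order of the string with spacing such that each interval overlaps exactly the intervals of the $d$ entries on either side of it; such a society is pairwise-intersecting and has approval number $d+1$. *)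

(* Defs.v *)
From Stdlib Require Import Reals List Arith.
Import ListNotations.
Open Scope R_scope.

(* A voter's approval set [a,b] ∪ [c,d], encoded by (a,b,c,d). *)
Definition voter := (R * R * R * R)%type.

Definition approves (v : voter) (p : R) : Prop :=
  let '(a, b, c, d) := v in (a <= p <= b) \/ (c <= p <= d).

Definition double_interval (v : voter) : Prop :=
  let '(a, b, c, d) := v in a <= b /\ c <= d /\ (b < c \/ d < a).

Definition approvesb (v : voter) (p : R) : bool :=
  let '(a, b, c, d) := v in
  ((if Rle_dec a p then true else false) && (if Rle_dec p b then true else false))
  || ((if Rle_dec c p then true else false) && (if Rle_dec p d then true else false)).

Definition society := list voter.

Definition is_double_interval_society (S : society) : Prop :=
  forall v, In v S -> double_interval v.

Definition pairwise_intersecting (S : society) : Prop :=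
  forall u v, In u S -> In v S -> exists p, approves u p /\ approves v p.

Definition approval_count (S : society) (p : R) : nat :=
  length (filter (fun v => approvesb v p) S).

Definition is_approval_number (S : society) (k : nat) : Prop :=
  (exists p, approval_count S p = k) /\ (forall p, (approval_count S p <= k)%nat).

Close Scope R_scope.

Definition is_double_string (n : nat) (s : list nat) : Prop :=
  length s = 2 * n /\ (forall x, In x s -> x < n) /\
  (forall a, a < n -> count_occ Nat.eq_dec s a = 2).

Definition positions (s : list nat) (a : nat) : list nat :=
  filter (fun i => Nat.eqb (nth i s 0) a) (seq 0 (length s)).

Definition absdiff (i j : nat) : nat := (i - j) + (j - i).

(* distance between symbols a and b: minimal |i - j| over occurrences
   (the default length s is never attained when both symbols occur) *)
Definition str_dist (s : list nat) (a b : nat) : nat :=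
  fold_right Nat.min (length s)
    (flat_map (fun i => map (fun j => absdiff i j) (positions s b)) (positions s a)).

Definition diameter (n : nat) (s : list nat) : nat :=
  list_max (flat_map (fun a => map (fun b => if Nat.eqb a b then 0 else str_dist s a b)
                                   (seq 0 n)) (seq 0 n)).

(* Main.v *)
Require Import Defs.
From Stdlib Require Import Reals List Arith Lia Lra.
Import ListNotations.

Lemma fold_min_ex (d n : nat) (l : list nat) :
  fold_right Nat.min d l <= n -> n < d -> exists x, In x l /\ x <= n.
Proof.
  induction l as [|x l IH]; simpl; intros H Hd.
  - lia.
  - destruct (Nat.le_gt_cases x n) as [Hx|Hx].
    + exists x; auto.
    + assert (fold_right Nat.min d l <= n) by lia.
      destruct (IH H0 Hd) as [y [Hy1 Hy2]]; eauto.
Qed.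

Lemma filter_map_S (f : nat -> bool) (l : list nat) :
  filter f (map S l) = map S (filter (fun i => f (S i)) l).
Proof.
  induction l; simpl; auto. destruct (f (S a)); simpl; congruence.
Qed.

Lemma positions_cons x s a :
  positions (x :: s) a = (if Nat.eqb x a then [0] else []) ++ map S (positions s a).
Proof.
  unfold positions. simpl length. cbn [seq]. rewrite <- seq_shift. simpl.
  rewrite filter_map_S. simpl. destruct (Nat.eqb x a); reflexivity.
Qed.

Lemma positions_len s a : length (positions s a) = count_occ Nat.eq_dec s a.
Proof.
  induction s as [|x s IH]; [reflexivity|].
  rewrite positions_cons. simpl. rewrite length_app, length_map, IH.
  destruct (Nat.eq_dec x a) as [e|e];
  [subst; rewrite Nat.eqb_refl; reflexivity|].
  apply Nat.eqb_neq in e. rewrite e. reflexivity.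
Qed.

Lemma in_positions s a i : In i (positions s a) <-> i < length s /\ nth i s 0 = a.
Proof.
  unfold positions. rewrite filter_In, in_seq, Nat.eqb_eq. lia.
Qed.

Lemma part2 (s : list nat) : is_double_string 8 s -> 3 <= diameter 8 s.
Proof.
  intros [Hlen [Hlt Hcnt]].
  destruct (Nat.le_gt_cases 3 (diameter 8 s)) as [|Hd]; [assumption|exfalso].
  set (a := nth 0 s 0).
  assert (Ha : a < 8).
  { apply Hlt. unfold a. apply nth_In. lia. }
  assert (HP := positions_len s a). rewrite (Hcnt a Ha) in HP.
  assert (H0 : In 0 (positions s a)) by (apply in_positions; split; [lia|reflexivity]).
  destruct (positions s a) as [|x [|y [|z l]]] eqn:Epos; simpl in HP; try discriminate.
  assert (Hj : exists j, forall i, In i (positions s a) -> i = 0 \/ i = j).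
  { rewrite Epos. destruct H0 as [<-|[<-|[]]].
    - exists y. intros i [<-|[<-|[]]]; auto.
    - exists x. intros i [<-|[<-|[]]]; auto. }
  destruct Hj as [j Hj].
  assert (Hnear : forall b, b < 8 -> b <> a ->
     In b (map (fun k => nth k s 0) [1;2;j-2;j-1;j+1;j+2])).
  { intros b Hb Hba.
    assert (Hsd : str_dist s a b <= 2).
    { unfold diameter in Hd.
      assert (Hm : list_max (flat_map (fun a0 => map (fun b0 => if Nat.eqb a0 b0 then 0
           else str_dist s a0 b0) (seq 0 8)) (seq 0 8)) <= 2) by lia.
      apply list_max_le in Hm. rewrite Forall_forall in Hm.
      specialize (Hm (if Nat.eqb a b then 0 else str_dist s a b)).
      rewrite (proj2 (Nat.eqb_neq a b)) in Hm by congruence.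
      apply Hm. apply in_flat_map. exists a. split; [apply in_seq; lia|].
      apply in_map_iff. exists b. split; [rewrite (proj2 (Nat.eqb_neq a b)) by congruence; reflexivity|apply in_seq; lia]. }
    unfold str_dist in Hsd. apply fold_min_ex in Hsd; [|lia].
    destruct Hsd as [d [Hin Hdle]].
    apply in_flat_map in Hin. destruct Hin as [i [Hi Hin]].
    apply in_map_iff in Hin. destruct Hin as [k [Hk Hkin]]. subst d.
    apply in_positions in Hkin. destruct Hkin as [Hk16 Hkb].
    assert (Hia := Hi).
    apply in_positions in Hia. destruct Hia as [_ Hia].
    assert (Hki : k <> i) by (intro; subst; congruence).
    assert (Hk0 : k <> 0) by (intro; subst; unfold a in Hba; congruence).
    apply Hj in Hi. unfold absdiff in Hdle.
    rewrite <- Hkb. apply (in_map (fun k => nth k s 0)).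
    destruct Hi as [->| ->]; simpl.
    - lia.
    - lia. }
  set (L := filter (fun b => negb (Nat.eqb b a)) (seq 0 8)).
  assert (HL : length L = 7).
  { unfold L. clear -Ha. do 8 (destruct a as [|a]; [reflexivity|]). lia. }
  assert (HND : NoDup L) by (apply NoDup_filter, seq_NoDup).
  assert (Hinc : incl L (map (fun k => nth k s 0) [1;2;j-2;j-1;j+1;j+2])).
  { intros b Hb. unfold L in Hb. apply filter_In in Hb. destruct Hb as [Hb1 Hb2].
    apply in_seq in Hb1. apply Hnear; [lia|].
    intro E. subst. rewrite Nat.eqb_refl in Hb2. discriminate. }
  apply NoDup_incl_length in Hinc; auto. simpl in Hinc. lia.
Qed.

Section P1S. Open Scope R_scope.

Definition S0 : society :=
  [ (0,0,2,6); (0,1,8,10); (0,2,11,13); (1,4,7,7);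
    (3,3,10,13); (4,5,9,11); (5,8,12,12); (6,9,13,13) ].

Local Ltac ap := unfold approves; first [left; lra | right; lra].
Local Ltac wit := first [ exists 0; split; ap | exists 1; split; ap | exists 2; split; ap
  | exists 3; split; ap | exists 4; split; ap | exists 5; split; ap | exists 6; split; ap
  | exists 7; split; ap | exists 8; split; ap | exists 9; split; ap | exists 10; split; ap
  | exists 11; split; ap | exists 12; split; ap | exists 13; split; ap ].

Local Ltac crunch := repeat (destruct (Rle_dec _ _); simpl; try (exfalso; lra)).

Lemma part1 : exists S : society,
      (length S = 8)%nat /\ is_double_interval_society S /\
      pairwise_intersecting S /\ is_approval_number S 3%nat.
Proof.
  exists S0. split; [reflexivity|]. split.
  { intros v Hv. simpl in Hv. repeat destruct Hv as [<-|Hv]; try contradiction;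
    simpl; lra. }
  split.
  { intros u v Hu Hv. simpl in Hu, Hv.
    repeat destruct Hu as [<-|Hu]; try contradiction;
    repeat destruct Hv as [<-|Hv]; try contradiction; wit. }
  split.
  - exists 0. unfold approval_count, S0. simpl. crunch. reflexivity.
  - intros p. unfold approval_count, S0. simpl. crunch; lia.
Qed.
End P1S.

Theorem proposition5p1 :
  (exists S : society,
      length S = 8 /\ is_double_interval_society S /\
      pairwise_intersecting S /\ is_approval_number S 3) /\
  (forall s : list nat, is_double_string 8 s -> 3 <= diameter 8 s).
Proof.
  split; [exact part1 | exact part2].
Qed.
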